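(* In the standing setup below, every $\phi\in\mathrm{Dr}_1(\mathbf{A}_{\mathcal H},L)$ is $\overline L$-isomorphic to some $\psi\in\mathrm{Dr}_1(\mathbf{A}_{\mathcal H},L)$ with $\psi_{\overline Y}=\tau_L$.
   Context: Standing setup: $\mathbb{F}_q$ is the finite field with $q$ elements. Let $d\ge5$ be odd, $m$ a positive divisor of $d$, $p\in\mathbb{F}_q[X]$ monic irreducible of degree $d/m$, $f=\alpha p^m$ with $\alpha\in\mathbb{F}_q^\times$, and $h\in\mathbb{F}_q[X]$ nonzero of degree $\le(d-1)/2$ and not divisible by $p$. Let $\xi=Y^2+h(X)Y-f(X)$ and assume the affine plane curve $\mathcal H:\xi=0$ is nonsingular. Let $\mathbf{A}_{\mathcal H}=\mathbb{F}_q[X][Y]/(\xi)$, $\mathfrak{p}=\langle p(\overline X),\overline Y\rangle$, $L$ a degree-$m$ extension of $\mathbf{A}_{\mathcal H}/\mathfrak{p}$ (so $[L:\mathbb{F}_q]=d$), $\gamma:\mathbf{A}_{\mathcal H}\to\mathbf{A}_{\mathcal H}/\mathfrak{p}\hookrightarrow L$. $L\{\tau\}$ is the Ore polynomial ring with $\tau a=a^q\tau$; $\tau_L=\tau^d$. A Drinfeld $\mathbf{A}_{\mathcal H}$-module over $L$ is an $\mathbb{F}_q$-algebra morphism $\phi:\mathbf{A}_{\mathcal H}\to L\{\tau\}$ with constant coefficient of $\phi_a$ equal to $\gamma(a)$ and some $\phi_a$ nonconstant; rank $1$ means $\deg_\tau\phi_a=\log_q\#(\mathbf{A}_{\mathcal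 H}/a\mathbf{A}_{\mathcal H})$ for all $a\ne0$; $\mathrm{Dr}_1(\mathbf{A}_{\mathcal H},L)$ is the set of these. $\phi,\psi$ are $\overline L$-isomorphic if $\lambda\phi_a\lambda^{-1}=\psi_a$ for all $a$, for some $\lambda\in\overline L^\times$. *)

(* Defs.v *)
From HB Require Import structures.
From mathcomp Require Import all_boot all_order all_algebra all_field.
From mathcomp Require Import ring_quotient generic_quotient closed_field.

Set Implicit Arguments.
Unset Strict Implicit.
Unset Printing Implicit Defensive.

Import GRing.Theory.
Local Open Scope ring_scope.
Local Open Scope quotient_scope.

Definition xi (F : fieldType) (h f : {poly F}) : {poly {poly F}} :=
  'X^2 + h%:P * 'X - f%:P.

Lemma size_xi_low (F : fieldType) (h f : {poly F}) :
  (size (h%:P * 'X - f%:P : {poly {poly F}})%R < 3)%N.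
Proof.
apply: (leq_ltn_trans (size_polyD _ _)); rewrite gtn_max size_polyN size_polyC.
rewrite (leq_ltn_trans (leq_b1 _)) // andbT.
apply: (leq_ltn_trans (size_polyMleq _ _)); rewrite size_polyX size_polyC.
by case: (_ != _).
Qed.

Lemma xi_monic (F : fieldType) (h f : {poly F}) : xi h f \is monic.
Proof.
by rewrite /xi -addrA monicE lead_coefDl ?lead_coefXn // size_polyXn size_xi_low.
Qed.

Lemma size_xi (F : fieldType) (h f : {poly F}) : size (xi h f) = 3%N.
Proof.
rewrite /xi -addrA size_polyDl; first by rewrite size_polyXn.
by rewrite size_polyXn size_xi_low.
Qed.

Definition xi_ideal (F : fieldType) (h f : {poly F}) : {pred {poly {poly F}}} :=
  fun P => Pdiv.Ring.rdvdp (xi h f) P.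

Lemma xi_ideal_closed (F : fieldType) (h f : {poly F}) :
  idealr_closed (xi_ideal h f).
Proof.
have mon := xi_monic h f.
split.
- by rewrite unfold_in /xi_ideal Pdiv.Ring.rdvdp0.
- rewrite unfold_in /xi_ideal /Pdiv.Ring.rdvdp Pdiv.Ring.rmodp_small ?oner_eq0 //.
  by rewrite size_poly1 size_xi.
- move=> a u v; rewrite !unfold_in /xi_ideal.
  move=> /(Pdiv.RingMonic.rdvdpP mon) [qu ->] /(Pdiv.RingMonic.rdvdpP mon) [qv ->].
  by apply/(Pdiv.RingMonic.rdvdpP mon); exists (a * qu + qv); rewrite mulrDl mulrA.
Qed.

HB.instance Definition _ (F : fieldType) (h f : {poly F}) :=
  isIdealr.Build _ (xi_ideal h f) (xi_ideal_closed h f).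


Notation AH h f := {ideal_quot (xi_ideal h f)}.

Definition AHpi (F : fieldType) (h f : {poly F}) (P : {poly {poly F}}) : AH h f :=
  \pi_(AH h f) P.

Definition Xbar (F : fieldType) (h f : {poly F}) : AH h f := AHpi h f ('X%:P).
Definition Ybar (F : fieldType) (h f : {poly F}) : AH h f := AHpi h f 'X.
Definition AHconst (F : fieldType) (h f : {poly F}) (c : F) : AH h f :=
  AHpi h f (c%:P%:P).
Definition in_frakp (F : fieldType) (h f p : {poly F}) (a : AH h f) : Prop :=
  exists u v : AH h f, a = u * AHpi h f (p%:P) + v * Ybar h f.

Definition alg_closure (K : countFieldType) : countClosedFieldType :=
  projT1 (countable_algebraic_closure K).
Definition to_alg_closure (K : countFieldType) : {rmorphism K -> alg_closure K} :=
  sval (projT2 (countable_algebraic_closure K)).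

Definition eval2 (K : nzRingType) (P : {poly {poly K}}) (x y : K) : K :=
  (P.[y%:P]).[x].

Definition nonsingular_curve (F : finFieldType) (h f : {poly F}) : Prop :=
  let P := map_poly (map_poly (to_alg_closure F)) (xi h f) in
  forall x y : alg_closure F,
    ~ [/\ eval2 P x y = 0,
          eval2 (map_poly deriv P) x y = 0   (* d/dX *)
        & eval2 (deriv P) x y = 0 ].         (* d/dY *)

(* Ore polynomial ring K{tau}, tau c = c^q tau.  An element            *)
(* sum_i c_i tau^i is represented by the coefficient polynomial        *)
(* sum_i c_i X^i : {poly K}; addition is that of {poly K}, and         *)
(* multiplication is the twisted product ore_mul q.                    *)
Definition ore_mul (K : nzRingType) (q : nat) (P Q : {poly K}) : {poly K} :=
  \sum_(i < size P) \sum_(j < size Q) (P`_i * Q`_j ^+ (q ^ i)) *: 'X^(i + j).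

Definition deg_tau (K : nzRingType) (P : {poly K}) : nat := (size P).-1.

(* #(R / aR) = n *)
Definition quot_card_eq (R : comNzRingType) (a : R) (n : nat) : Prop :=
  exists s : seq R,
    [/\ size s = n,
        (forall i j, (i < n)%N -> (j < n)%N ->
           (exists c, s`_i - s`_j = a * c) -> i = j)
      & (forall x, exists2 i, (i < n)%N & exists c, x - s`_i = a * c)].

Definition is_Drinfeld_module (F L : finFieldType) (iota : {rmorphism F -> L})
    (h f : {poly F}) (gamma : AH h f -> L) (phi : AH h f -> {poly L}) : Prop :=
  [/\
      [/\ (forall a b, phi (a + b) = phi a + phi b),
          (forall a b, phi (a * b) = ore_mul #|F| (phi a) (phi b)),
          phi 1 = 1
        & (forall c : F, phi (AHconst h f c) = (iota c)%:P)],
      (forall a, (phi a)`_0 = gamma a)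
    &
      exists a, (0 < deg_tau (phi a))%N ].

Definition is_rank1 (F L : finFieldType) (h f : {poly F})
    (phi : AH h f -> {poly L}) : Prop :=
  forall a : AH h f, a != 0 -> quot_card_eq a (#|F| ^ deg_tau (phi a)).

Definition Dr1 (F L : finFieldType) (iota : {rmorphism F -> L})
    (h f : {poly F}) (gamma : AH h f -> L) (phi : AH h f -> {poly L}) : Prop :=
  is_Drinfeld_module iota gamma phi /\ is_rank1 phi.

Definition Lbar_isomorphic (F L : finFieldType) (h f : {poly F})
    (phi psi : AH h f -> {poly L}) : Prop :=
  exists lam : alg_closure L, lam != 0 /\
    forall a : AH h f,
      ore_mul #|F| (ore_mul #|F| lam%:P (map_poly (to_alg_closure L) (phi a)))
              (lam^-1)%:P
      = map_poly (to_alg_closure L) (psi a).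

(* Main.v *)
Require Import Defs.
From HB Require Import structures.
From mathcomp Require Import all_boot all_order all_algebra all_field.
From mathcomp Require Import ring_quotient generic_quotient closed_field.
From mathcomp Require Import zify ring.
From mathcomp Require abelian.

Set Implicit Arguments.
Unset Strict Implicit.
Unset Printing Implicit Defensive.

Import GRing.Theory.
Local Open Scope ring_scope.

Lemma sum_widen (R : nmodType) (a b : nat) (F : nat -> R) :
  (a <= b)%N -> (forall i, (a <= i < b)%N -> F i = 0) ->
  \sum_(i < a) F i = \sum_(i < b) F i.
Proof.
move=> ab H; rewrite -!(big_mkord xpredT) (big_cat_nat (leq0n a) ab) /=.
rewrite [X in _ = _ + X]big_nat_cond [X in _ = _ + X]big1 ?addr0 //.
by move=> i /andP[/H ->].
Qed.

Lemma sum_pick (R : nzSemiRingType) (M n i : nat) (G : nat -> R) :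
  (n < M)%N ->
  \sum_(j < M) (G j * (n == (i + j)%N)%:R) = if (i <= n)%N then G (n - i)%N else 0.
Proof.
move=> nM; case: ifP => iln.
  have hM : (n - i < M)%N by apply: leq_ltn_trans (leq_subr _ _) nM.
  rewrite (bigD1 (Ordinal hM)) //= (subnKC iln) eqxx mulr1 big1 ?addr0 //.
  move=> j /eqP nej; case: eqP; rewrite ?mulr0 // => nij; case: nej.
  by apply: val_inj => /=; rewrite nij addKn.
rewrite big1 // => j _; case: eqP; rewrite ?mulr0 // => nij.
by move: iln; rewrite nij leq_addr.
Qed.

Lemma coef_ore (K : comNzRingType) (q : nat) (P Q : {poly K}) (n : nat) :
  (0 < q)%N ->
  (ore_mul q P Q)`_n = \sum_(i < n.+1) P`_i * Q`_(n - i) ^+ (q ^ i).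
Proof.
move=> q0.
pose N := (size P + size Q + n.+1)%N.
pose c i j := P`_i * Q`_j ^+ (q ^ i).
have c0 : forall i j, (size P <= i)%N || (size Q <= j)%N -> c i j = 0.
  move=> i j /orP[/leq_sizeP P0|/leq_sizeP Q0]; first by rewrite /c P0 // mul0r.
  by rewrite /c Q0 // expr0n expn_eq0 (negbTE (lt0n_neq0 q0)) mulr0.
have E1 : (ore_mul q P Q)`_n =
   \sum_(i < N) \sum_(j < N) (c i j * (n == (i + j)%N)%:R).
  rewrite /ore_mul coef_sum.
  transitivity (\sum_(i < size P) \sum_(j < N) (c i j * (n == (i + j)%N)%:R)).
    apply: eq_bigr => i _; rewrite coef_sum.
    rewrite (eq_bigr (fun j : 'I_(size Q) => c i j * (n == (i + j)%N)%:R)); last first.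
      by move=> j _; rewrite coefZ coefXn.
    apply: (@sum_widen _ (size Q) N (fun j => c i j * (n == (i + j)%N)%:R)).
    - by rewrite /N; lia.
    - by move=> j /andP[hj _]; rewrite c0 ?hj ?orbT ?mul0r.
  apply: (@sum_widen _ (size P) N (fun i => \sum_(j < N) (c i j * (n == (i + j)%N)%:R))).
  - by rewrite /N; lia.
  - by move=> i /andP[hi _]; rewrite big1 // => j _; rewrite c0 ?hi ?mul0r.
rewrite E1.
rewrite (eq_bigr (fun i : 'I_N => if (i <= n)%N then c i (n - i)%N else 0)); last first.
  by move=> i _; rewrite sum_pick // /N ltn_addl.
rewrite -(@sum_widen _ n.+1 N (fun i => if (i <= n)%N then c i (n - i)%N else 0)); last 2 first.
- by rewrite /N; lia.
- by move=> i /andP[hi _]; rewrite leqNgt hi.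
by apply: eq_bigr => i _; rewrite -ltnS ltn_ord.
Qed.

Lemma ore_map (K K' : comNzRingType) (g : {rmorphism K -> K'}) q P Q :
  (0 < q)%N ->
  map_poly g (ore_mul q P Q) = ore_mul q (map_poly g P) (map_poly g Q).
Proof.
move=> q0; apply/polyP => n; rewrite coef_map /= !coef_ore // rmorph_sum.
by apply: eq_bigr => i _; rewrite rmorphM rmorphXn /= !coef_map.
Qed.

Definition low (K : nzRingType) (P : {poly K}) : nat := find (fun c => c != 0) P.

Lemma low_below (K : nzRingType) (P : {poly K}) i : (i < low P)%N -> P`_i = 0.
Proof. by move=> /(before_find 0) /negbFE /eqP. Qed.

Lemma coef_low (K : nzRingType) (P : {poly K}) : P != 0 -> P`_(low P) != 0.
Proof.
move=> P0; apply: (@nth_find _ 0 (fun c => c != 0)).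
apply/hasP; exists (lead_coef P); last by rewrite lead_coef_eq0.
by rewrite lead_coefE mem_nth // prednK // size_poly_gt0.
Qed.

Lemma lowE (K : nzRingType) (P : {poly K}) e :
  P`_e != 0 -> (forall i, (i < e)%N -> P`_i = 0) -> low P = e.
Proof.
move=> Pe Pb; have P0 : P != 0 by apply: contraNneq Pe => ->; rewrite coef0.
have := coef_low P0; case: (ltngtP (low P) e) => // h.
  by rewrite Pb // eqxx.
by rewrite low_below ?eqxx in Pe.
Qed.

Lemma ore_low (K : idomainType) q (P Q : {poly K}) : (0 < q)%N ->
  P != 0 -> Q != 0 ->
  [/\ (ore_mul q P Q)`_(low P + low Q) = P`_(low P) * Q`_(low Q) ^+ (q ^ low P),
      (forall n, (n < low P + low Q)%N -> (ore_mul q P Q)`_n = 0),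
      ore_mul q P Q != 0
    & low (ore_mul q P Q) = (low P + low Q)%N].
Proof.
move=> q0 P0 Q0.
have Hb : forall n, (n < low P + low Q)%N -> (ore_mul q P Q)`_n = 0.
  move=> n hn; rewrite coef_ore // big1 // => i _.
  case: (ltnP i (low P)) => hi; first by rewrite low_below // mul0r.
  rewrite [Q`__]low_below ?expr0n ?expn_eq0 ?(negbTE (lt0n_neq0 q0)) ?mulr0 //.
  by move: hn hi (ltn_ord i); move: (nat_of_ord i) (low P) (low Q) => a b c; lia.
have He : (ore_mul q P Q)`_(low P + low Q) = P`_(low P) * Q`_(low Q) ^+ (q ^ low P).
  rewrite coef_ore //.
  have hl : (low P < (low P + low Q).+1)%N by lia.
  rewrite (bigD1 (Ordinal hl)) //= addKn big1 ?addr0 // => i /eqP hi.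
  case: (ltnP i (low P)) => h; first by rewrite low_below // mul0r.
  have h' : (low P < i)%N.
    by rewrite ltn_neqAle h andbT; apply/eqP => e; apply: hi; apply: val_inj.
  rewrite [Q`__]low_below ?expr0n ?expn_eq0 ?(negbTE (lt0n_neq0 q0)) ?mulr0 //.
  have := ltn_ord i; lia.
have Hne : (ore_mul q P Q)`_(low P + low Q) != 0.
  by rewrite He mulf_neq0 ?coef_low // expf_neq0 // coef_low.
split => //; first by apply: contraNneq Hne => ->; rewrite coef0.
exact: lowE.
Qed.

Lemma ore_comm_low (K : comNzRingType) q (P T : {poly K}) e : (0 < q)%N ->
  (forall i, (i < e)%N -> P`_i = 0) ->
  (ore_mul q P T)`_e = P`_e * T`_0 ^+ (q ^ e) /\
  (ore_mul q T P)`_e = T`_0 * P`_e.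
Proof.
move=> q0 Pb; split; rewrite coef_ore //.
  rewrite big_ord_recr /= subnn big1 ?add0r // => i _; rewrite Pb ?mul0r //.
rewrite big_ord_recl /= subn0 expn0 expr1 big1 ?addr0 // => i _.
rewrite Pb ?expr0n ?expn_eq0 ?(negbTE (lt0n_neq0 q0)) ?mulr0 //.
have := ltn_ord i; rewrite /bump /=; lia.
Qed.

Lemma ore_Xn_r (K : comNzRingType) q (B : {poly K}) d n : (0 < q)%N ->
  (ore_mul q B 'X^d)`_(n + d) = B`_n.
Proof.
move=> q0; rewrite coef_ore //.
have hl : (n < (n + d).+1)%N by lia.
rewrite (bigD1 (Ordinal hl)) //= addKn coefXn eqxx expr1n mulr1 big1 ?addr0 //.
move=> i /eqP hi; rewrite coefXn; case: eqP => h; last by rewrite expr0n expn_eq0 (negbTE (lt0n_neq0 q0)) mulr0.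
by case: hi; apply: val_inj => /=; have := ltn_ord i; lia.
Qed.

Lemma ore_Xn_l (K : comNzRingType) q (B : {poly K}) d n : (0 < q)%N ->
  (ore_mul q 'X^d B)`_(n + d) = B`_n ^+ (q ^ d).
Proof.
move=> q0; rewrite coef_ore //.
have hl : (d < (n + d).+1)%N by lia.
rewrite (bigD1 (Ordinal hl)) //= coefXn eqxx mul1r big1 ?addr0; last first.
  move=> i /eqP hi; rewrite coefXn; case: eqP => h; last by rewrite mul0r.
  by case: hi; apply: val_inj.
by rewrite addnK.
Qed.

Section Conj.
Variables (K : fieldType) (q : nat) (lam : K).
Hypotheses (q0 : (0 < q)%N) (lam0 : lam != 0).

Definition cj (P : {poly K}) : {poly K} :=
  \poly_(i < size P) (lam * P`_i * (lam^-1) ^+ (q ^ i)).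

Lemma coef_cj P i : (cj P)`_i = lam * P`_i * (lam^-1) ^+ (q ^ i).
Proof.
rewrite coef_poly; case: ltnP => // h.
by rewrite nth_default // mulr0 mul0r.

Qed.

Lemma size_cj P : size (cj P) = size P.
Proof.
have [->|P0] := eqVneq P 0; first by rewrite /cj size_poly0 polyseq0 /= poly_def big_ord0 size_poly0.
rewrite size_poly_eq // mulf_neq0 ?mulf_neq0 ?expf_neq0 ?invr_neq0 //.
by rewrite -lead_coefE lead_coef_eq0.
Qed.

Lemma cj_ore2 P : ore_mul q (ore_mul q lam%:P P) (lam^-1)%:P = cj P.
Proof.
apply/polyP => n; rewrite coef_cj coef_ore // big_ord_recr /= subnn coefC eqxx.
rewrite big1 ?add0r; last first.
  move=> i _; rewrite coefC; case: eqP; first by have := ltn_ord i; lia.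
  by rewrite expr0n expn_eq0 (negbTE (lt0n_neq0 q0)) mulr0.
congr (_ * _); rewrite coef_ore // big_ord_recl /= coefC eqxx subn0 expn0 expr1.
by rewrite big1 ?addr0 // => i _; rewrite coefC /= mul0r.
Qed.

Lemma cjD P Q : cj (P + Q) = cj P + cj Q.
Proof. by apply/polyP => n; rewrite coefD !coef_cj coefD mulrDr mulrDl. Qed.

Lemma cjC c : cj c%:P = c%:P.
Proof.
apply/polyP => n; rewrite coef_cj !coefC; case: eqP => [->|]; last by rewrite mulr0 mul0r.
by rewrite expn0 expr1 mulrC mulrA mulVf // mul1r.
Qed.

Lemma cj_ore P Q : cj (ore_mul q P Q) = ore_mul q (cj P) (cj Q).
Proof.
apply/polyP => n; rewrite coef_cj !coef_ore // mulr_sumr mulr_suml.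
apply: eq_bigr => i _; rewrite !coef_cj.
have hi : (i <= n)%N by have := ltn_ord i; lia.
rewrite !exprMn -!exprM -expnD subnK //.
have E : lam^-1 ^+ (q ^ i) * lam ^+ (q ^ i) = 1 by rewrite -exprMn mulVf // expr1n.
by rewrite -[LHS]mulr1 -E; ring.
Qed.

End Conj.

Lemma frob_add (K : comNzRingType) p r : p \in [pchar K] ->
  forall x y : K, (x + y) ^+ (p ^ r) = x ^+ (p ^ r) + y ^+ (p ^ r).
Proof.
move=> pc; elim: r => [|r IH] x y; first by rewrite !expn0 !expr1.
rewrite expnSr !exprM IH.
exact: (pFrobenius_autD_comm pc (mulrC (x ^+ (p ^ r)) (y ^+ (p ^ r)))).
Qed.

Lemma card_pchar (F : finFieldType) : exists p r, [/\ prime p, p \in [pchar F] & #|F| = (p ^ r)%N].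
Proof.
have [p pr pc] := finPcharP F.
have ab := abelian.fin_ring_pchar_abelem pc.
have /p_natP [r hr] := abelian.abelem_pgroup ab.
by exists p, r; split => //; rewrite -cardsT.
Qed.

Lemma expf_card_pow (F : finFieldType) (c : F) e : c ^+ (#|F| ^ e) = c.
Proof.
elim: e => [|e IH]; first by rewrite expn0 expr1.
by rewrite expnSr exprM IH expf_card.
Qed.

Lemma frobQ_add (F L : finFieldType) (iota : {rmorphism F -> L}) e :
  forall x y : L, (x + y) ^+ (#|F| ^ e) = x ^+ (#|F| ^ e) + y ^+ (#|F| ^ e).
Proof.
have [p [r [pr pc ->]]] := card_pchar F.
have pcL : p \in [pchar L] by rewrite (rmorph_pchar iota).
by move=> x y; rewrite -expnM frob_add.
Qed.

Lemma frobQ_sum (L : comNzRingType) Q (HQ : forall x y : L, (x + y) ^+ Q = x ^+ Q + y ^+ Q)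
  (Q0 : (0 < Q)%N) n (G : 'I_n -> L) :
  (\sum_(i < n) G i) ^+ Q = \sum_(i < n) (G i) ^+ Q.
Proof.
apply: (big_morph (fun x => x ^+ Q)) => //.
by rewrite expr0n; move: Q0; rewrite lt0n => /negbTE ->.
Qed.

Lemma frobQ_horner (L : comNzRingType) Q (HQ : forall x y : L, (x + y) ^+ Q = x ^+ Q + y ^+ Q)
  (Q0 : (0 < Q)%N) (P : {poly L}) t :
  (forall i, P`_i ^+ Q = P`_i) -> t ^+ Q = t -> P.[t] ^+ Q = P.[t].
Proof.
move=> Pc tQ; rewrite horner_coef frobQ_sum //.
by apply: eq_bigr => i _; rewrite exprMn Pc -exprM mulnC exprM tQ.
Qed.

Lemma Poly_tuple_inj (F : nzRingType) k (g1 g2 : k.-tuple F) : Poly g1 = Poly g2 -> g1 = g2.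
Proof.
move=> E; apply: eq_from_tnth => i; rewrite !(tnth_nth 0).
by have := congr1 (fun P : {poly F} => P`_i) E; rewrite /= !coef_Poly.
Qed.

Lemma deg_bound (F L : finFieldType) (iota : {rmorphism F -> L}) (p : {poly F}) (t : L) e :
  irreducible_poly p -> root (map_poly iota p) t -> (0 < e)%N ->
  t ^+ (#|F| ^ e) = t -> ((size p).-1 <= e)%N.
Proof.
move=> irr rt e0 tQ.
set k := (size p).-1; set Q := (#|F| ^ e)%N.
have q1 : (1 < #|F|)%N by apply: finNzRing_gt1.
have Q1 : (1 < Q)%N by rewrite /Q -{1}(expn0 #|F|) ltn_exp2l.
have HQ := frobQ_add iota e.
pose ev (g : k.-tuple F) := (map_poly iota (Poly g)).[t].
pose S := map ev (enum {: k.-tuple F}).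
pose R : {poly L} := 'X^Q - 'X.
have sR : size R = Q.+1.
  rewrite /R size_polyDl size_polyXn //.
  by rewrite size_polyN size_polyX; lia.
have R0 : R != 0 by rewrite -size_poly_eq0 sR.
have rootS : all (root R) S.
  apply/allP => x /mapP [g _ ->]; rewrite /root /R !hornerE subr_eq0; apply/eqP.
  apply: frobQ_horner => //; first by lia.
  by move=> i; rewrite coef_map /= -rmorphXn expf_card_pow.
have inj : injective ev.
  move=> g1 g2 E; apply: Poly_tuple_inj.
  apply/eqP; rewrite -subr_eq0; apply/negP => /negP g0.
  set g := Poly g1 - Poly g2 in g0.
  have sg : (size g <= k)%N.
    apply: leq_trans (size_polyD _ _) _; rewrite size_polyN geq_max.
    by rewrite !(leq_trans (size_Poly _)) ?size_tuple.
  have cop : coprimep p g.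
    rewrite -gcdp_eqp1; have [//|hp] := irredp_XsubCP irr (dvdp_gcdl p g).
    have : p %| g by rewrite -(eqp_dvdl _ hp) dvdp_gcdr.
    move=> /(dvdp_leq g0) hle; exfalso; have sp : (1 < size p)%N by case: irr.
    by move: sg hle sp; rewrite /k; move: (size g) (size p) => a b; lia.
  have cop' : coprimep (map_poly iota p) (map_poly iota g) by rewrite coprimep_map.
  have := coprimep_root cop' rt.
  by rewrite /g rmorphB /= hornerD hornerN -/(ev g1) -/(ev g2) E subrr eqxx.
have uS : uniq S by rewrite map_inj_uniq ?enum_uniq.
have := max_poly_roots R0 rootS uS.
rewrite sR size_map -cardE card_tuple ltnS /Q leq_exp2l //.
Qed.

Lemma exists_nroot (C : closedFieldType) n (c : C) : (0 < n)%N -> exists x : C, x ^+ n = c.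
Proof.
move=> n0; have [x hx] := @solve_monicpoly C n (fun i => if i == 0%N then c else 0) n0.
exists x; rewrite hx; case: n n0 {hx} => // n _.
rewrite big_ord_recl /= expr0 mulr1 big1 ?addr0 // => i _.
by rewrite /bump /= mul0r.
Qed.

Lemma fixed_image (L : finFieldType) (x : alg_closure L) :
  x ^+ #|L| = x -> exists y, to_alg_closure L y = x.
Proof.
move=> hx; set to := to_alg_closure L.
have [yin|nin] := boolP (x \in map to (enum L)).
  by move/mapP: yin => [y _ ->]; exists y.
have q1 : (1 < #|L|)%N by apply: finNzRing_gt1.
pose R : {poly alg_closure L} := 'X^#|L| - 'X.
have sR : size R = (#|L|).+1.
  rewrite /R size_polyDl size_polyXn //.
  by rewrite size_polyN size_polyX; lia.
have R0 : R != 0 by rewrite -size_poly_eq0 sR.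
have rts : all (root R) (x :: map to (enum L)).
  rewrite /= {1}/root /R !hornerE hx subrr eqxx /=.
  apply/allP => z /mapP [y _ ->]; rewrite /root !hornerE -rmorphXn expf_card subrr //.
have u : uniq (x :: map to (enum L)).
  by rewrite /= nin map_inj_uniq ?enum_uniq //; apply: fmorph_inj.
have := max_poly_roots R0 rts u.
by rewrite sR /= size_map -cardE ltnn.
Qed.
Module AHM.
Local Open Scope quotient_scope.


Section AHlemmas.
Variables (F : fieldType) (h f : {poly F}).

Lemma AHpiD P Q : AHpi h f (P + Q) = AHpi h f P + AHpi h f Q.
Proof. by rewrite /AHpi rmorphD. Qed.
Lemma AHpiM P Q : AHpi h f (P * Q) = AHpi h f P * AHpi h f Q.
Proof. by rewrite /AHpi rmorphM. Qed.
Lemma AHpiB P Q : AHpi h f (P - Q) = AHpi h f P - AHpi h f Q.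
Proof. by rewrite /AHpi rmorphB. Qed.
Lemma AHpi1 : AHpi h f 1 = 1.
Proof. by rewrite /AHpi rmorph1. Qed.
Lemma AHpiX P n : AHpi h f (P ^+ n) = AHpi h f P ^+ n.
Proof. by rewrite /AHpi rmorphXn. Qed.

Lemma AHpi_eq0 P : (AHpi h f P == 0) = Pdiv.Ring.rdvdp (xi h f) P.
Proof.
have := @Quotient.idealrBE _ (xi_ideal h f) P 0.
rewrite subr0 => E.
rewrite /AHpi -[X in _ == X](rmorph0 (\pi_(AH h f))).
by rewrite -E.
Qed.

Lemma AHpi_surj (a : AH h f) : AHpi h f (repr a) = a.
Proof. by rewrite /AHpi reprK. Qed.


Lemma AHpi_xi : AHpi h f (xi h f) = 0.
Proof. by apply/eqP; rewrite AHpi_eq0 (Pdiv.RingMonic.rdvdpp (xi_monic h f)). Qed.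

Lemma Y_Yh : Ybar h f * (Ybar h f + AHpi h f h%:P) = AHpi h f f%:P.
Proof.
apply/eqP; rewrite -subr_eq0; have := AHpi_xi; rewrite /xi => <-.
rewrite /Ybar !AHpiB !AHpiD !AHpiM; apply/eqP; ring.
Qed.

Lemma Ybar_neq0 : Ybar h f != 0.
Proof.
rewrite /Ybar AHpi_eq0 /Pdiv.Ring.rdvdp Pdiv.Ring.rmodp_small ?polyX_eq0 //.
by rewrite size_polyX size_xi.
Qed.

Lemma AHpi_polyC (L : nzRingType) (iota : {rmorphism F -> L}) (G : {rmorphism AH h f -> L}) :
  (forall c, G (AHconst h f c) = iota c) -> (forall x : L, GRing.comm x (G (Xbar h f))) ->
  forall g : {poly F}, G (AHpi h f g%:P) = (map_poly iota g).[G (Xbar h f)].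
Proof.
move=> Gc Gcomm; elim/poly_ind => [|g c IH].
  by rewrite rmorph0 map_poly0 horner0 /AHpi !rmorph0.
have -> : (g * 'X + c%:P)%:P = g%:P * ('X%:P) + c%:P%:P by rewrite polyCD polyCM.
rewrite AHpiD AHpiM (rmorphD G) (rmorphM G) IH -/(Xbar h f) -/(AHconst h f c) Gc.
rewrite rmorphD rmorphM /= map_polyX map_polyC /=.
rewrite hornerD hornerC hornerM_comm ?hornerX //.
exact: comm_polyX.
Qed.

Lemma rep_mod (x : AH h f) :
  exists c, x - AHpi h f ((((repr x)`_0) %% f)%:P) = Ybar h f * c.
Proof.
set P := repr x.
have rt : root (P - (P.[0])%:P) 0 by rewrite /root !hornerE subrr.
have [Q hQ] := factor_theorem _ _ rt.
have E : P = Q * 'X + (P`_0)%:P.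
  by move: hQ; rewrite polyC0 subr0 horner_coef0 => <-; rewrite subrK.
exists (AHpi h f Q + AHpi h f ((P`_0 %/ f)%:P) * (Ybar h f + AHpi h f h%:P)).
set r := P`_0 %% f; set dq := P`_0 %/ f.
have E2 : P`_0 = dq * f + r by apply: divp_eq.
rewrite -{1}(AHpi_surj x) -/P {1}E E2 !polyCD polyCM.
rewrite !AHpiD !AHpiM -Y_Yh /Ybar; ring.
Qed.

Lemma h_notin (p : {poly F}) (alpha : F) (m : nat) :
  f = alpha *: p ^+ m -> (0 < m)%N -> ~~ (p %| h) -> ~ in_frakp p (AHpi h f h%:P).
Proof.
move=> hf m0 nph [u [v E]].
move: E; rewrite -(AHpi_surj u) -(AHpi_surj v) /Ybar -!AHpiM -AHpiD => /eqP.
rewrite -subr_eq0 -AHpiB AHpi_eq0 => /(Pdiv.RingMonic.rdvdpP (xi_monic h f)) [W hW].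
have := congr1 (fun P => P.[0]) hW; rewrite /= /xi !hornerE.
move: (repr u).[0] W.[0] => U0 W0.
rewrite hf; case: m m0 {hf} => // m _ E0; move/negP: nph; apply.
have -> : h = U0 * p - (W0 * (alpha *: p ^+ m)) * p.
  move/eqP: E0; rewrite subr_eq => /eqP ->; rewrite expr0n /= sub0r -!mul_polyC exprSr mulrN addrC !mulrA.
  by [].
by apply: dvdp_sub; apply: dvdp_mulIr.
Qed.

End AHlemmas.

Lemma quot_card1 (R : comNzRingType) (a : R) : quot_card_eq a 1 -> exists c, 1 = a * c.
Proof.
move=> [s [_ _ cov]].
have [i i1 [c1 h1]] := cov 1; have [j j1 [c0 h0]] := cov 0.
move: i1 j1; rewrite !ltnS !leqn0 => /eqP ei /eqP ej; subst i j.
exists (c1 - c0); rewrite mulrBr -h1 -h0; ring.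
Qed.

Lemma card_bound (F : finFieldType) (h f : {poly F}) n :
  f != 0 -> quot_card_eq (Ybar h f) n -> (n <= #|F| ^ (size f).-1)%N.
Proof.
move=> f0 [s [ss dist cov]].
set D := (size f).-1.
pose r (x : AH h f) := (repr x)`_0 %% f.
have sr : forall x, (size (r x) <= D)%N.
  move=> x; have := ltn_modpN0 (repr x)`_0 f0; rewrite /D -/(r x).
  by case: (size f) => //.
pose tup (i : 'I_n) : D.-tuple F := [tuple (r s`_i)`_j | j < D].
have inj : injective tup.
  move=> i j E; apply: val_inj; apply: dist (ltn_ord i) (ltn_ord j) _.
  have Er : r s`_i = r s`_j.
    apply/polyP => k; case: (ltnP k D) => hk.
      by have := congr1 (fun t => tnth t (Ordinal hk)) E; rewrite !tnth_mktuple.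
    by rewrite (nth_default _ (leq_trans (sr s`_i) hk)) (nth_default _ (leq_trans (sr s`_j) hk)).
  have [ci hi] := rep_mod s`_i; have [cj hj] := rep_mod s`_j.
  exists (ci - cj); rewrite mulrBr -hi -hj -/(r s`_i) -/(r s`_j) Er; ring.
by have := leq_card tup inj; rewrite card_ord card_tuple.
Qed.

End AHM.
Import AHM.

Lemma ore0l (K : nzRingType) q (Q : {poly K}) : ore_mul q 0 Q = 0.
Proof. by rewrite /ore_mul size_poly0 big_ord0. Qed.

Lemma ore0r (K : nzRingType) q (P : {poly K}) : ore_mul q P 0 = 0.
Proof. by rewrite /ore_mul big1 // => i _; rewrite size_poly0 big_ord0. Qed.

Lemma lowC (K : nzRingType) (c : K) : c != 0 -> low c%:P = 0%N.
Proof. by move=> c0; apply: lowE => //; rewrite coefC. Qed.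

Lemma arith1 (a b d : nat) : (a.-1 <= d)%N -> (d <= b)%N -> (b < a)%N -> a = d.+1 /\ b = d.
Proof. lia. Qed.

Theorem lemma6 (F L : finFieldType) (iota : {rmorphism F -> L})
    (d m : nat) (p : {poly F}) (alpha : F) (h : {poly F}) :
  odd d -> (5 <= d)%N -> (0 < m)%N -> (m %| d)%N ->
  p \is monic -> irreducible_poly p -> size p = (d %/ m).+1 ->
  alpha != 0 ->
  h != 0 -> (size h <= (d.-1)./2.+1)%N -> ~~ (p %| h) ->
  let f := alpha *: p ^+ m in
  nonsingular_curve h f ->
  #|L| = (#|F| ^ d)%N ->
  forall gamma : {rmorphism AH h f -> L},
  (forall c : F, gamma (AHconst h f c) = iota c) ->
  (forall a : AH h f, gamma a = 0 <-> in_frakp p a) ->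
  forall phi : AH h f -> {poly L},
  Dr1 iota gamma phi ->
  exists psi : AH h f -> {poly L},
    [/\ Dr1 iota gamma psi, Lbar_isomorphic phi psi & psi (Ybar h f) = 'X^d].
Proof.
move=> dodd d5 m0 md pmon pirr sp a0 h0 sh nph f ns cardL gamma gc gfrak phi.
move=> [[[phiD phiM phi1 phiC] phi0 [a1 ha1]] rk].
set q := #|F|.
have q1 : (1 < q)%N by apply: finNzRing_gt1.
have q0 : (0 < q)%N by lia.
set k := (d %/ m)%N.
have dk : d = (k * m)%N by rewrite divnK.
have p0 : p != 0 by apply: monic_neq0.
have sf : size f = d.+1.
  rewrite /f size_scale //; have := size_exp p m; rewrite sp /= -/k -dk => <-.
  by rewrite prednK // size_poly_gt0 expf_neq0.
have f0 : f != 0 by rewrite -size_poly_eq0 sf.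
have gY : gamma (Ybar h f) = 0 by apply/gfrak; exists 0, 1; rewrite mul0r add0r mul1r.
have gpb : gamma (AHpi h f p%:P) = 0 by apply/gfrak; exists 1, 0; rewrite mul0r addr0 mul1r.
have gh : gamma (AHpi h f h%:P) != 0.
  by apply/eqP => /gfrak; apply: (@h_notin F h f p alpha m erefl m0 nph).
set PY := phi (Ybar h f).
have Ddeg : (deg_tau PY <= d)%N.
  have := card_bound f0 (rk _ (Ybar_neq0 h f)); rewrite sf /= -/q.
  by rewrite leq_exp2l.
have Dpos : (0 < deg_tau PY)%N.
  rewrite lt0n; apply/negP => /eqP D0.
  have := rk _ (Ybar_neq0 h f); rewrite -/PY D0 expn0 => /quot_card1 [c hc].
  have := congr1 gamma hc; rewrite rmorph1 rmorphM /= gY mul0r => /eqP.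
  by rewrite oner_eq0.
have PY0 : PY != 0 by apply: contraTneq Dpos => ->; rewrite /deg_tau size_poly0.
set hb := AHpi h f h%:P.
set PH := phi (Ybar h f + hb).
have PH0 : PH`_0 != 0 by rewrite /PH phi0 rmorphD /= gY add0r.
have PHne : PH != 0 by apply: contraNneq PH0 => ->; rewrite coef0.
have lowPH : low PH = 0%N by apply: lowE.
have PFE : phi (AHpi h f f%:P) = ore_mul q PY PH by rewrite -Y_Yh phiM.
have [_ _ PFne lowPF] := ore_low q0 PY0 PHne.
rewrite lowPH addn0 -PFE in lowPF; rewrite -PFE in PFne.
set pb := AHpi h f p%:P.
have fbE : AHpi h f f%:P = AHconst h f alpha * pb ^+ m.
  have -> : (f%:P : {poly {poly F}}) = (alpha%:P)%:P * (p%:P) ^+ m.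
    by rewrite /f -mul_polyC polyCM rmorphXn.
  by rewrite AHpiM AHpiX.
have ia0 : iota alpha != 0 by rewrite fmorph_eq0.
set Pp := phi pb.
have Pp0 : Pp != 0.
  apply: contraNneq PFne => Pz.
  rewrite fbE phiM phiC.
  have -> : pb ^+ m = pb * pb ^+ m.-1 by rewrite -exprS prednK.
  by rewrite phiM -/Pp Pz ore0l ore0r.
have pow : forall n, phi (pb ^+ n) != 0 /\ low (phi (pb ^+ n)) = (n * low Pp)%N.
  elim => [|n [IH1 IH2]].
    rewrite expr0 phi1 mul0n; split; first exact: oner_neq0.
    by apply: lowE => [|i]; rewrite ?coef1 ?oner_neq0.
  rewrite exprS phiM; have [_ _ ne lw] := ore_low q0 Pp0 IH1.
  by split => //; rewrite lw IH2 mulSn.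
have lowPY : low PY = (m * low Pp)%N.
  rewrite -lowPF fbE phiM phiC.
  have [_ _ _ lw] := ore_low q0 (negbT (introF eqP (fun E => negP ia0 (introT eqP (etrans (esym (coefC _ 0)) (etrans (congr1 (fun P => P`_0) E) (coef0 _ 0))))))) (pow m).1.
  by rewrite lw lowC // (pow m).2 mulnC.
set e := low Pp.
have e0 : (0 < e)%N.
  rewrite lt0n; apply/negP => /eqP ez.
  by have := coef_low Pp0; rewrite -/e ez /Pp phi0 gpb eqxx.
set t := gamma (Xbar h f).
have tQ : t ^+ (q ^ e) = t.
  have E : ore_mul q Pp (phi (Xbar h f)) = ore_mul q (phi (Xbar h f)) Pp.
    by rewrite -!phiM mulrC.
  have [c1 c2] := ore_comm_low (phi (Xbar h f)) q0 (@low_below _ Pp).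
  move: (congr1 (fun P : {poly L} => P`_e) E); rewrite /= c1 c2 phi0 -/t => E2.
  apply: (mulfI (coef_low Pp0)); by rewrite E2 mulrC.
have rt : root (map_poly iota p) t.
  rewrite /root -/t -(@AHpi_polyC F h f L iota gamma gc) ?gpb //.
  by move=> x; apply: mulrC.
have ke : (k <= e)%N.
  by have := deg_bound pirr rt e0 tQ; rewrite sp.
have lowd : (d <= low PY)%N by rewrite lowPY dk mulnC leq_mul2l ke orbT.
have lowlt : (low PY < size PY)%N.
  rewrite ltnNge; apply/negP => hs.
  by have := coef_low PY0; rewrite nth_default // eqxx.
have [sPY lowPYd] := arith1 Ddeg lowd lowlt.
set ell := PY`_d.
have ell0 : ell != 0 by rewrite /ell -lowPYd coef_low.
have PYE : PY = ell *: 'X^d.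
  apply/polyP => n; rewrite coefZ coefXn.
  case: (ltngtP n d) => hn.
  - by rewrite mulr0 low_below // lowPYd.
  - by rewrite mulr0 nth_default // sPY.
  - by rewrite hn mulr1.
set to := to_alg_closure L.
have QL1 : (1 < q ^ d)%N by rewrite -cardL finNzRing_gt1.
have n0 : (0 < (q ^ d).-1)%N by rewrite -subn1 subn_gt0.
have [lam hlam] := @exists_nroot (alg_closure L) (q ^ d).-1 (to ell) n0.
have lam0 : lam != 0.
  apply/eqP => lz; move: hlam; rewrite lz expr0n.
  have -> : ((q ^ d).-1 == 0%N) = false by apply/negbTE; rewrite -lt0n.
  by move/eqP; rewrite eq_sym fmorph_eq0 (negbTE ell0).
have lamQ : lam ^+ (q ^ d) = lam * to ell.
  by rewrite -hlam -exprS prednK // ltnW.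
pose Phi a := cj q lam (map_poly to (phi a)).
have PhiD : forall a b, Phi (a + b) = Phi a + Phi b.
  by move=> a b; rewrite /Phi phiD rmorphD cjD.
have PhiM : forall a b, Phi (a * b) = ore_mul q (Phi a) (Phi b).
  by move=> a b; rewrite /Phi phiM ore_map // cj_ore.
have PhiC : forall c, Phi (AHconst h f c) = (to (iota c))%:P.
  by move=> c; rewrite /Phi phiC map_polyC cjC.
have Phi1 : Phi 1 = 1.
  by rewrite /Phi phi1 rmorph1 -polyC1 cjC.
have PhiY : Phi (Ybar h f) = 'X^d.
  apply/polyP => n; rewrite /Phi coef_cj coef_map -/PY PYE coefZ !coefXn /=.
  case: eqP => [->|_]; last by rewrite mulr0 rmorph0 mulr0 mul0r.
  by rewrite mulr1 exprVn lamQ mulfV // mulf_neq0 // fmorph_eq0.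
have sPhi : forall a, size (Phi a) = size (phi a).
  by move=> a; rewrite /Phi size_cj // size_map_poly.
have Phifix : forall a n, (Phi a)`_n ^+ #|L| = (Phi a)`_n.
  move=> a n; have E : Phi (a * Ybar h f) = Phi (Ybar h f * a) by rewrite mulrC.
  rewrite !PhiM PhiY in E.
  have := congr1 (fun P : {poly alg_closure L} => P`_(n + d)) E.
  by rewrite /= ore_Xn_r // ore_Xn_l // => E'; rewrite cardL -E'.
pose pre (x : alg_closure L) : L := odflt 0 [pick y | to y == x].
have to_pre : forall x, (exists y, to y = x) -> to (pre x) = x.
  move=> x [y hy]; rewrite /pre; case: pickP => [z /eqP //|H].
  by have := H y; rewrite hy eqxx.
pose psi a := \poly_(i < size (phi a)) pre ((Phi a)`_i).
have mpsi : forall a, map_poly to (psi a) = Phi a.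
  move=> a; apply/polyP => i; rewrite coef_map coef_poly.
  case: ltnP => hi; first by apply: to_pre; apply: fixed_image; apply: Phifix.
  rewrite [RHS]nth_default ?sPhi //; apply/eqP; rewrite fmorph_eq0.
  by rewrite eqxx.
have minj : injective (map_poly to).
  by apply: map_inj_poly; [apply: fmorph_inj | apply: rmorph0].
have spsi : forall a, size (psi a) = size (phi a).
  by move=> a; rewrite -(size_map_poly to) mpsi sPhi.
exists psi; split.
- split; first split.
  + split.
    * move=> a b; apply: minj; rewrite mpsi PhiD -!mpsi. first [ by rewrite rmorphD | by rewrite raddfD | by apply: esym; apply: rmorphD | by rewrite (rmorphD (map_poly to)) ].
    * by move=> a b; apply: minj; rewrite ore_map // !mpsi PhiM.
    * apply: minj; rewrite mpsi Phi1.
      first [ by rewrite rmorph1 | by rewrite -polyC1 map_polyC rmorph1 | by rewrite -polyC1 map_polyC /= (rmorph1 to) | idtac "FAIL1" ].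
    * move=> c; apply: (@minj (psi (AHconst h f c)) (iota c)%:P).
      by rewrite mpsi PhiC map_polyC.
  + move=> a; apply: (fmorph_inj to); rewrite -coef_map mpsi /Phi coef_cj coef_map.
    by rewrite phi0 expn0 expr1 mulrAC mulfV // mul1r.
  + by exists a1; rewrite /deg_tau spsi.
  + by move=> a a0'; rewrite /deg_tau spsi; apply: rk.
- by exists lam; split => // a; rewrite cj_ore2 // mpsi.
- by apply: minj; rewrite mpsi PhiY map_polyXn.
Qed.
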